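(* Let $k\ge 0$ and $K=2k^3$. Let $\mathcal I$ be an interpretation coloured by $\kappa$ that is $K$-sparse, and let $\mathcal Q$ be a finite interpretation with $|\Delta^{\mathcal Q}|\le k$. Then $\mathcal Q$ maps homomorphically into $\mathcal I$ if and only if $\mathcal Q$ maps homomorphically into the quotient $\mathcal I/{\sim_K}$.
   Context: Homomorphisms are maps between domains preserving membership in every concept name and every role name. Distance: view $\mathcal I$ as an undirected graph with an edge between $x,y$ whenever $(x,y)$ or $(y,x)\in r^{\mathcal I}$ for some role name $r$; $d_{\mathcal I}(x,y)$ is the length of a shortest undirected path ($\infty$ if none). $N_k(x)=\{y: d_{\mathcal I}(x,y)\le k\}$, and $\mathcal I\upharpoonright N_k(x)$ is the induced subinterpretation (domain $N_k(x)$, concepts and roles restricted). A coloured interpretation is $\mathcal I$ with a partial map $\kappa\colon\mathrm{dom}(\kappa)\to C$, $\mathrm{dom}(\kappa)\subseteq\Delta^{\mathcal I}$, $C$ a set of colours; subinterpretations are coloured by the restriction of $\kappa$. A homomorphism $h$ from $\mathcal I$ (coloured by $\kappa$) to $\mathcal J$ (coloured by $\theta$) preserves colours if for all $x$: $x\in\mathrm{dom}(\kappa)\iff h(x)\in\mathrm{dom}(\theta)$, and then $\kappa(x)=\theta(h(x))$. $x\sim_k y$ iff $x=y$, or $x,y\in\mathrm{dom}(\kappa)$, $\kappa(x)=\kappa(y)$, and there are colour-preserving homomorphisms $\mathcal I\upharpoonright N_k(x)\to\mathcal I\upharpoonright N_k(y)$ mapping $x$ to $y$ and $\mathcal I\upharpoonright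 N_k(y)\to\mathcal I\upharpoonright N_k(x)$ mapping $y$ to $x$. $\mathcal I$ is $k$-sparse if for every $x$ and distinct $y,y'\in N_k(x)\cap\mathrm{dom}(\kappa)$ we have $\kappa(y)\ne\kappa(y')$. For an equivalence relation $\sim$ on $\Delta^{\mathcal I}$, the quotient $\mathcal I/{\sim}$ has domain the classes $[x]_\sim$, $A^{\mathcal I/\sim}=\{[x]_\sim: x\in A^{\mathcal I}\}$ and $r^{\mathcal I/\sim}=\{([x]_\sim,[y]_\sim):(x,y)\in r^{\mathcal I}\}$. *)

(* Defs.v *)
From mathcomp Require Import all_boot.
Unset Printing Implicit Defensive.

Record interp (CN RN : Type) := Interp {
  dom :> Type;
  cnc : CN -> dom -> Prop;
  rol : RN -> dom -> dom -> Prop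
}.
Arguments Interp {CN RN} dom cnc rol.
Arguments dom {CN RN} i.
Arguments cnc {CN RN} i _ _.
Arguments rol {CN RN} i _ _ _.


Definition is_hom {CN RN : Type} (I J : interp CN RN) (h : I -> J) : Prop :=
  (forall (A : CN) (x : I), cnc I A x -> cnc J A (h x)) /\
  (forall (r : RN) (x y : I), rol I r x y -> rol J r (h x) (h y)).

Definition maps_into {CN RN : Type} (I J : interp CN RN) : Prop :=
  exists h : I -> J, is_hom I J h.

Definition adj {CN RN : Type} (I : interp CN RN) (x y : I) : Prop :=
  exists r : RN, rol I r x y \/ rol I r y x.

(* within I n x y  <->  d_I(x,y) <= n *)
Fixpoint within {CN RN : Type} (I : interp CN RN) (n : nat) (x y : I) : Prop :=
  match n with
  | 0 => x = y
  | n'.+1 => within I n' x y \/ exists z, within I n' x z /\ adj I z y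
  end.

Definition restrict {CN RN : Type} (I : interp CN RN) (P : I -> Prop) : interp CN RN :=
  Interp {z : I | P z}
    (fun A z => cnc I A (proj1_sig z))
    (fun r z w => rol I r (proj1_sig z) (proj1_sig w)).

Definition nbhd {CN RN : Type} (I : interp CN RN) (n : nat) (x : I) : interp CN RN :=
  restrict I (within I n x).

(* x ~_n y for I coloured by kappa (partial colouring as an option-valued map);
   colours of the subinterpretations are the restriction of kappa. *)
Definition simk {CN RN : Type} {C : Type} (I : interp CN RN) (kappa : I -> option C)
    (n : nat) (x y : I) : Prop :=
  x = y \/
  (exists c : C, kappa x = Some c /\ kappa y = Some c /\
    (exists h : nbhd I n x -> nbhd I n y,
        is_hom (nbhd I n x) (nbhd I n y) h /\
        (forall z, kappa (proj1_sig z) = kappa (proj1_sig (h z))) /\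
        (forall z, proj1_sig z = x -> proj1_sig (h z) = y)) /\
    (exists h : nbhd I n y -> nbhd I n x,
        is_hom (nbhd I n y) (nbhd I n x) h /\
        (forall z, kappa (proj1_sig z) = kappa (proj1_sig (h z))) /\
        (forall z, proj1_sig z = y -> proj1_sig (h z) = x))).

Definition sparse {CN RN : Type} {C : Type} (I : interp CN RN) (kappa : I -> option C)
    (n : nat) : Prop :=
  forall x y y' : I, within I n x y -> within I n x y' -> y <> y' ->
    forall c c' : C, kappa y = Some c -> kappa y' = Some c' -> c <> c'.

Definition quotient {CN RN : Type} (I : interp CN RN) (R : I -> I -> Prop) : interp CN RN :=
  Interp {S : I -> Prop | exists x, S = R x}
    (fun A S => exists x, proj1_sig S = R x /\ cnc I A x)
    (fun r S T => exists x y, proj1_sig S = R x /\ proj1_sig T = R y /\ rol I r x y).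

(* Main.v *)
Require Import Defs.
From mathcomp Require Import all_boot.
From Stdlib Require Import ClassicalEpsilon.
From mathcomp Require Import zify.

Lemma within_refl {CN RN} {I : interp CN RN} n (x : I) : within I n x x.
Proof. by elim: n => [|n IH] //=; left. Qed.

Lemma within_S {CN RN} {I : interp CN RN} {n} {x y : I} : within I n x y -> within I n.+1 x y.
Proof. by move=> H; left. Qed.

Lemma within_mono {CN RN} {I : interp CN RN} {n m} {x y : I} : n <= m -> within I n x y -> within I m x y.
Proof.
elim: m => [|m IH]; first by rewrite leqn0 => /eqP ->.
rewrite leq_eqVlt => /orP [/eqP -> // | /IH H /H]; exact: within_S.
Qed.

Lemma within_adj {CN RN} {I : interp CN RN} {x y : I} : adj I x y -> within I 1 x y.
Proof. by move=> H; right; exists x; split. Qed.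

Lemma adj_sym {CN RN} {I : interp CN RN} {x y : I} : adj I x y -> adj I y x.
Proof. by case=> r [H|H]; exists r; [right|left]. Qed.

Lemma within_trans {CN RN} {I : interp CN RN} {a b} {x y z : I} :
  within I a x y -> within I b y z -> within I (a + b) x z.
Proof.
move=> Hxy; elim: b z => [|b IH] z /=; first by move=> <-; rewrite addn0.
rewrite addnS /=; case=> [H|[w [Hw Hwz]]]; first by left; apply: IH.
by right; exists w; split=> //; apply: IH.
Qed.

Lemma within_sym {CN RN} {I : interp CN RN} {n} {x y : I} : within I n x y -> within I n y x.
Proof.
elim: n x y => [|n IH] x y /=; first by move=> ->.
case=> [H|[z [Hz Hzy]]]; first by left; apply: IH.
have := within_trans (within_adj (adj_sym Hzy)) (IH _ _ Hz).
by rewrite add1n.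
Qed.

Definition Trans {CN RN C} (I : interp CN RN) (kappa : I -> option C) (c : I) (m : nat) (T : I -> I) : Prop :=
 (forall A x, within I m c x -> cnc I A x -> cnc I A (T x)) /\
 (forall r x y, within I m c x -> within I m c y -> rol I r x y -> rol I r (T x) (T y)) /\
 (forall x, within I m c x -> kappa (T x) = kappa x).

Lemma Trans_image {CN RN C} {I : interp CN RN} {kappa : I -> option C} {c m T j z} :
  Trans I kappa c m T -> j <= m -> within I j c z -> within I j (T c) (T z).
Proof.
move=> [_ [HR _]]; elim: j z => [|j IH] z jm /=; first by move=> ->.
case=> [H|[w [Hw [r Hr]]]]; first by left; apply: IH => //; exact: ltnW.
right; exists (T w); split; first by apply: IH => //; exact: ltnW.
have Hwm : within I m c w by apply: within_mono (ltnW jm) Hw.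
have Hzm : within I m c z by apply: within_mono jm _; right; exists w; split => //; exists r.
by exists r; case: Hr => Hr; [left|right]; apply: HR.
Qed.

Lemma Trans_mono {CN RN C} {I : interp CN RN} {kappa : I -> option C} {c m} m' {T} :
  m' <= m -> Trans I kappa c m T -> Trans I kappa c m' T.
Proof.
move=> mm [H1 [H2 H3]]; split; [|split].
- by move=> A x Hx; apply: H1; apply: within_mono Hx.
- by move=> r x y Hx Hy; apply: H2; apply: within_mono; eauto.
- by move=> x Hx; apply: H3; apply: within_mono Hx.
Qed.

Lemma Trans_shift {CN RN C} {I : interp CN RN} {kappa : I -> option C} {c m T j b} :
  Trans I kappa c m T -> j <= m -> within I j c b -> Trans I kappa b (m - j) T.
Proof.
move=> [H1 [H2 H3]] jm Hb.
have W : forall x, within I (m - j) b x -> within I m c x.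
  by move=> x Hx; have := within_trans Hb Hx; rewrite subnKC.
split; [|split].
- by move=> A x Hx; apply: H1; apply: W.
- by move=> r x y Hx Hy; apply: H2; apply: W.
- by move=> x Hx; apply: H3; apply: W.
Qed.

Lemma Trans_comp {CN RN C} {I : interp CN RN} {kappa : I -> option C} {c m m' T T'} :
  Trans I kappa c m T -> Trans I kappa (T c) m' T' -> Trans I kappa c (minn m m') (fun x => T' (T x)).
Proof.
move=> HT [H1 [H2 H3]].
have W : forall x, within I (minn m m') c x -> within I m c x /\ within I m' (T c) (T x).
  move=> x Hx; split; first by apply: within_mono Hx; exact: geq_minl.
  apply: within_mono (geq_minr m m') _; apply: Trans_image HT _ Hx; exact: geq_minl.
case: HT => [G1 [G2 G3]].
split; [|split].
- by move=> A x /W [Ha Hb] HA; apply: H1 => //; apply: G1.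
- by move=> r x y /W [Ha Hb] /W [Ha' Hb'] Hr; apply: H2 => //; apply: G2.
- by move=> x /W [Ha Hb]; rewrite H3 // G3.
Qed.

Lemma Trans_id {CN RN C} {I : interp CN RN} (kappa : I -> option C) c m :
  Trans I kappa c m id.
Proof. by split; [|split]. Qed.

Lemma simk_Trans {CN RN C} {I : interp CN RN} {kappa : I -> option C} {n a b} :
  simk I kappa n a b -> exists T, Trans I kappa a n T /\ T a = b.
Proof.
case=> [<-|[c [_ [_ [[h [[hA hR] [hk hc]]] _]]]]]; first by exists id; split=> //; apply: Trans_id.
pose T z := match excluded_middle_informative (within I n a z) with
            | left H => proj1_sig (h (exist _ z H)) | right _ => z end.
exists T; split; [split; [|split]|].
- move=> A x Hx HA; rewrite /T; case: excluded_middle_informative => // H.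
  exact: (hA A (exist _ x H)).
- move=> r x y Hx Hy Hr; rewrite /T.
  case: excluded_middle_informative => // H; case: excluded_middle_informative => // H'.
  exact: (hR r (exist _ x H) (exist _ y H')).
- move=> x Hx; rewrite /T; case: excluded_middle_informative => // H.
  exact: esym (hk (exist _ x H)).
- rewrite /T; case: excluded_middle_informative => H; last by case: H; apply: within_refl.
  exact: (hc (exist _ a H)).
Qed.

Fixpoint nrel {T} (e : T -> T -> Prop) n (a b : T) : Prop :=
  match n with 0 => a = b | n'.+1 => exists c, e a c /\ nrel e n' c b end.

Lemma path_nrel (T : finType) (e : rel T) a p : path e a p -> nrel e (size p) a (last a p).
Proof.
elim: p a => [|y p IH] a //= /andP [eay ep]; exists y; split=> //; exact: IH.
Qed.

Lemma connect_nrel (T : finType) (e : rel T) a b : connect e a b -> exists n, n < #|T| /\ nrel e n a b.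
Proof.
case/connectP => p ep ->; case: (shortenP ep) => p' ep' u _.
exists (size p'); split; last exact: path_nrel.
move/card_uniqP: u => u; have := max_card (pred_of_seq (a :: p')); by rewrite u.
Qed.

Definition asb (P : Prop) : bool := if excluded_middle_informative P then true else false.
Lemma asbP (P : Prop) : asb P <-> P.
Proof. by rewrite /asb; case: excluded_middle_informative. Qed.

Theorem theorem6 (CN RN C : Type) (I : interp CN RN) (kappa : I -> option C)
    (k : nat) (QT : finType) (QA : CN -> QT -> Prop) (Qr : RN -> QT -> QT -> Prop) :
  let K := 2 * k ^ 3 in
  let Q := Interp QT QA Qr in
  sparse I kappa K ->
  #|QT| <= k ->
  (maps_into Q I <-> maps_into Q (quotient I (simk I kappa K))).
Proof.
move=> K Q Hsp Hcard.
have HK : 2 * k <= K.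
  have : k <= k ^ 3 by case: k {Hcard K Hsp} => // k'; rewrite expnS leq_pmulr // expn_gt0.
  rewrite /K; lia.
clearbody K; rewrite /Q; clear Q.
split.
  case=> h [hA hR].
  exists (fun q => exist (fun S => exists x, S = simk I kappa K x) (simk I kappa K (h q)) (ex_intro _ (h q) erefl)).
  split.
  - by move=> A q HA /=; exists (h q); split => //; apply: hA.
  - by move=> r q q' Hr /=; exists (h q), (h q'); split; [|split] => //; apply: hR.
case=> g [gA gR].
set R := simk I kappa K.
simpl in gA, gR.

pose xq q := proj1_sig (constructive_indefinite_description _ (proj2_sig (g q))).
have Hxq : forall q, proj1_sig (g q) = R (xq q).
  by move=> q; rewrite /xq; case: constructive_indefinite_description.
clearbody xq.
have Cl1 : forall q x, proj1_sig (g q) = R x -> R x (xq q).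
  move=> q x Hx; have -> : R x = R (xq q) by rewrite -Hx Hxq.
  by rewrite /R /simk; left.
have Cl2 : forall q x, proj1_sig (g q) = R x -> R (xq q) x.
  move=> q x Hx; have -> : R (xq q) = R x by rewrite -Hx Hxq.
  by rewrite /R /simk; left.
have Cl3 : forall q x, proj1_sig (g q) = R x -> kappa x = kappa (xq q).
  move=> q x /Cl2; case=> [-> //|[c [H1 [H2 _]]]]; by rewrite H1 H2.
have Cl4 : forall q x, proj1_sig (g q) = R x -> kappa (xq q) = None -> x = xq q.
  move=> q x /Cl2; case=> [-> //|[c [H1 _]]]; by rewrite H1.
have Rig : forall p z z', within I K p z -> within I K p z' -> kappa z = kappa z' ->
    kappa z <> None -> z = z'.
  move=> p z z' Hz Hz' E N; case: (excluded_middle_informative (z = z')) => // Hne.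
  case E1 : (kappa z) => [c|]; last by rewrite E1 in N.
  exfalso; apply: (Hsp p z z' Hz Hz' Hne c c E1 _ erefl); by rewrite -E.
pose e' : rel QT := fun q q' => asb (exists r, Qr r q q' \/ Qr r q' q).
have He'sym : symmetric e'.
  move=> a b; apply/idP/idP => /asbP [r Hr]; apply/asbP; exists r; by case: Hr => H; [right|left].
have Hstep : forall q q', e' q q' -> exists x y, proj1_sig (g q) = R x /\ proj1_sig (g q') = R y /\ adj I x y.
  move=> q q' /asbP [r [H|H]].
  - case: (gR r q q' H) => x [y [H1 [H2 H3]]]; exists x, y; do !split => //; exists r; by left.
  - case: (gR r q' q H) => y [x [H1 [H2 H3]]]; exists x, y; do !split => //; exists r; by right.
pose Reach P q d := exists F, Trans I kappa (xq q) (K - d) F /\ within I d P (F (xq q)).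
have Hreach_step : forall P q q' d, e' q q' -> d < K -> Reach P q d -> Reach P q' d.+1.
  move=> P q q' d /Hstep [x [y [Hx [Hy Hxy]]]] dK [F [HF HFP]].
  have [f1 [Hf1 f1x]] := simk_Trans (Cl1 _ _ Hx).
  have [f2 [Hf2 f2x]] := simk_Trans (Cl2 _ _ Hy).
  rewrite -f1x in HF HFP.
  have HG := Trans_comp Hf1 HF.
  have Emin : minn K (K - d) = K - d by lia.
  rewrite Emin in HG.
  have Hy1 := within_adj Hxy.
  have HGy := Trans_shift HG (ltac:(lia) : 1 <= K - d) Hy1.
  have HGi := Trans_image HG (ltac:(lia) : 1 <= K - d) Hy1.
  rewrite -f2x in HGy.
  have HH := Trans_comp Hf2 HGy.
  exists (fun z => F (f1 (f2 z))); split.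
    by apply: (Trans_mono _ _ HH); lia.
  rewrite f2x -addn1; exact: within_trans HFP HGi.
have Hreach_n : forall P n a b d, nrel e' n a b -> d + n < K -> Reach P a d -> Reach P b (d + n).
  move=> P; elim=> [|n IH] a b d /=; first by move=> -> _; rewrite addn0.
  move=> [c [eac Hn]] dK Ra; rewrite -addSnnS; apply: (IH c) => //; first by rewrite addSnnS.
  apply: Hreach_step eac _ Ra; lia.
have Hq : forall q, exists p : (I -> I) * nat, p.2 < k /\ Trans I kappa (xq q) (K - p.2) p.1 /\
     within I p.2 (xq (root e' q)) (p.1 (xq q)).
  move=> q; have : connect e' (root e' q) q by rewrite (sym_connect_sym He'sym) connect_root.
  case/connect_nrel => n [nT Hn].
  have nk := leq_trans nT Hcard.
  have R0 : Reach (xq (root e' q)) (root e' q) 0.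
    by exists id; split; [rewrite subn0; exact: Trans_id | exact: within_refl].
  have nK : 0 + n < K.
    have := leq_trans nT Hcard; lia.
  have [F [HF HW]] := Hreach_n _ _ _ _ _ Hn nK R0.
  exists (F, n); rewrite add0n in HF HW; split => //; lia.
pose pq q := proj1_sig (constructive_indefinite_description _ (Hq q)).
have Hpq : forall q, (pq q).2 < k /\ Trans I kappa (xq q) (K - (pq q).2) (pq q).1 /\
     within I (pq q).2 (xq (root e' q)) ((pq q).1 (xq q)).
  by move=> q; rewrite /pq; case: constructive_indefinite_description.
clearbody pq.

pose unc q := asb (kappa (xq q) = None).
pose e : rel QT := fun q q' => unc q && unc q' && e' q q'.
have Hesym : symmetric e.
  move=> a b; rewrite /e (He'sym a b); by case: (unc a); case: (unc b).
have Hnrel_w : forall n a b, nrel e n a b -> within I n (xq a) (xq b).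
  elim=> [|n IH] a b; first by move=> Eab; rewrite Eab; exact: within_refl.
  move=> [c [/andP [/andP [ua uc] eac] Hn]].
  have [x [y [Hx [Hy Hxy]]]] := Hstep _ _ eac.
  rewrite (Cl4 _ _ Hx (proj1 (asbP _) ua)) (Cl4 _ _ Hy (proj1 (asbP _) uc)) in Hxy.
  rewrite -add1n; exact: within_trans (within_adj Hxy) (IH _ _ Hn).
have Hblk : forall q, exists n, n < k /\ within I n (xq (root e q)) (xq q).
  move=> q; have : connect e (root e q) q by rewrite (sym_connect_sym Hesym) connect_root.
  case/connect_nrel => n [nT Hn]; exists n; split; first exact: leq_trans nT Hcard.
  exact: Hnrel_w.
have Hroot : forall q, root e' (root e q) = root e' q.
  move=> q; apply/(rootP (sym_connect_sym He'sym)).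
  have : connect e (root e q) q by rewrite (sym_connect_sym Hesym) connect_root.
  apply: connect_sub => a b /andP [_ H]; exact: connect1.
pose h q := if unc q then (pq (root e q)).1 (xq q) else (pq q).1 (xq q).
have CC : forall q, ~~ unc q -> forall z, within I (2 * k) (xq (root e' q)) z ->
    kappa z = kappa (xq q) -> z = h q.
  move=> q nu z Hz Ez; rewrite /h (negbTE nu).
  have [dl [[_ [_ HT3]] HW]] := Hpq q.
  have Hc : kappa ((pq q).1 (xq q)) = kappa (xq q) by apply: HT3; exact: within_refl.
  apply: (Rig (xq (root e' q))).
  - exact: within_mono HK Hz.
  - apply: within_mono HW; lia.
  - by rewrite Ez Hc.
  - rewrite Ez => N; move: nu; rewrite /unc; by move/asbP: N => ->.
exists h; split.
- move=> A q /gA [x [Hx HAx]] /=.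
  case U: (unc q).
  + have Ex := Cl4 _ _ Hx (proj1 (asbP _) U).
    have [n [nk Hn]] := Hblk q.
    have [dl [[T1 _] _]] := Hpq (root e q).
    rewrite /h U; apply: T1; last by rewrite -Ex.
    apply: within_mono Hn; lia.
  + have [f1 [[F1 _] f1x]] := simk_Trans (Cl1 _ _ Hx).
    have [_ [[T1 _] _]] := Hpq q.
    rewrite /h U; have := T1 A (f1 x); rewrite f1x; apply; first exact: within_refl.
    rewrite -f1x; apply: F1 => //; exact: within_refl.
- move=> r0 q q' Hr /=.
  have [x [y [Hx [Hy Hxr]]]] := gR r0 q q' Hr.
  have He' : e' q q' by apply/asbP; exists r0; left.
  have Pe : root e' q = root e' q' by apply/(rootP (sym_connect_sym He'sym)); exact: connect1.
  have Adj : adj I x y by exists r0; left.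
  case U: (unc q).
  + have Ex := Cl4 _ _ Hx (proj1 (asbP _) U).
    have [n [nk Hn]] := Hblk q.
    have [db [HT HW]] := Hpq (root e q).
    have Hy' : within I (n + 1) (xq (root e q)) y.
      by apply: within_trans Hn (within_adj _); rewrite -Ex.
    suff Eq : h q' = (pq (root e q)).1 y.
      rewrite Eq /h U; apply: (proj1 (proj2 HT)); last by rewrite -Ex.
      * apply: within_mono Hn; lia.
      * apply: within_mono Hy'; lia.
    case U': (unc q').
    * have Ey := Cl4 _ _ Hy (proj1 (asbP _) U').
      have eqq : e q q' by rewrite /e U U' He'.
      have Rb : root e q' = root e q by apply/esym/(rootP (sym_connect_sym Hesym)); exact: connect1.
      by rewrite /h U' Rb Ey.
    * apply: esym; apply: CC; first by rewrite U'.
      - rewrite -Pe -(Hroot q).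
        have Hi := Trans_image HT (ltac:(lia) : n + 1 <= K - (pq (root e q)).2) Hy'.
        apply: within_mono (within_trans HW Hi); lia.
      - rewrite (proj2 (proj2 HT)) ?(Cl3 _ _ Hy) //; apply: within_mono Hy'; lia.
  + case U': (unc q').
    * have Ey := Cl4 _ _ Hy (proj1 (asbP _) U').
      have [n [nk Hn]] := Hblk q'.
      have [db [HT HW]] := Hpq (root e q').
      have Hx' : within I (n + 1) (xq (root e q')) x.
        by apply: within_trans Hn (within_adj _); rewrite -Ey; apply: adj_sym.
      suff Eq : h q = (pq (root e q')).1 x.
        rewrite Eq /h U'; apply: (proj1 (proj2 HT)); last by rewrite -Ey.
        - apply: within_mono Hx'; lia.
        - apply: within_mono Hn; lia.
      apply: esym; apply: CC; first by rewrite U.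
      - rewrite Pe -(Hroot q').
        have Hi := Trans_image HT (ltac:(lia) : n + 1 <= K - (pq (root e q')).2) Hx'.
        apply: within_mono (within_trans HW Hi); lia.
      - rewrite (proj2 (proj2 HT)) ?(Cl3 _ _ Hx) //; apply: within_mono Hx'; lia.
    * have [f1 [Hf1 f1x]] := simk_Trans (Cl1 _ _ Hx).
      have [dq [HT HW]] := Hpq q.
      rewrite -f1x in HT HW.
      have HG := Trans_comp Hf1 HT.
      have Ehq : h q = (pq q).1 (f1 x) by rewrite /h U f1x.
      have Hy1 := within_adj Adj.
      have Ehq' : h q' = (pq q).1 (f1 y).
        apply: esym; apply: CC; first by rewrite U'.
        - rewrite -Pe.
          have Hi := Trans_image HG (ltac:(lia) : 1 <= minn K (K - (pq q).2)) Hy1.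
          apply: within_mono (within_trans HW Hi); lia.
        - rewrite (proj2 (proj2 HG)) ?(Cl3 _ _ Hy) //; apply: within_mono Hy1; lia.
      rewrite Ehq Ehq'; apply: (proj1 (proj2 HG)) => //.
      - apply: within_mono (within_refl 0 x); lia.
      - apply: within_mono Hy1; lia.
Qed.
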